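(* Assume AM defends every real machine, i.e. $d_r=e_r$ for all $r\in\mathcal M$. For each $m\in\mathcal M$ let $\pi^{(m)}$ be the naive deterministic AM strategy that always creates a sandbox of type $m$ (i.e. $\pi^{(m)}_m=1$ and $\pi^{(m)}_{m'}=0$ for $m'\ne m$), and let $v(m)=1-\max_{\rho\in[0,1]^{\mathcal M}}u_M(\pi^{(m)},\rho)$, which equals $u_{AM}(\pi^{(m)},\rho)$ for every best response $\rho$ of M to $\pi^{(m)}$. If $m^*\in\arg\max_{m\in\mathcal M}e_m$ (the strategy called Majority), then $v(m^* )\ge v(m)$ for all $m\in\mathcal M$; that is, Majority is AM-optimal among naive deterministic AM strategies.
   Context: Let $\mathcal M$ be a finite nonempty set of machine (environment) types. Let $e\in[0,1]^{\mathcal M}$ with $\sum_{r\in\mathcal M}e_r=1$ ($e_r$ is the fraction of all real machines that are of type $r$), and $d\in[0,1]^{\mathcal M}$ with $0\le d_r\le e_r$ ($d_r$ is the fraction of all real machines that are of type $r$ and defended by the anti-malware AM); put $D=\sum_{r}d_r$. An AM strategy $\pi$ assigns to each real machine type $r\in\mathcal M$ a vector $\pi^r\in[0,1]^{\mathcal M}$ with $\sum_{m}\pi^r_m\le 1$ ($\pi^r_m$ is the probability that AM creates a sandbox of type $m$ on a defended real machine of type $r$; with probability $1-\sum_m\pi^r_m$ no sandbox is created). AM's strategy is naive if $\pi^r$ does not depend on $r$; then we write $\pi_m$ for $\pi^r_m$. A malware (M) strategy is a vector $\rho\in[0,1]^{\mathcal M}$ ($\rho_m$ is the probability M attacks when it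 perceives environment $m$). The utilities are $$u_M(\pi,\rho)=\sum_{r\in\mathcal M}\Big[(e_r-d_r)\rho_r+d_r\Big(1-\sum_{m\in\mathcal M}\pi^r_m\rho_m\Big)\rho_r\Big],$$ $$u_{AM}(\pi,\rho)=\sum_{r\in\mathcal M}d_r\Big[\sum_{m\in\mathcal M}\big(\pi^r_m\rho_m+\pi^r_m(1-\rho_m)(1-\rho_r)\big)+\Big(1-\sum_{m\in\mathcal M}\pi^r_m\Big)(1-\rho_r)\Big].$$ A best response of M to $\pi$ is any $\rho\in\arg\max_{\hat\rho\in[0,1]^{\mathcal M}}u_M(\pi,\hat\rho)$. A pair $(\pi,\rho)$ with $\rho$ a best response to $\pi$ is an equilibrium; it is AM-optimal within a class of AM strategies if $\pi$ lies in the class and $u_{AM}(\pi,\rho)\ge u_{AM}(\pi',\rho')$ for every equilibrium $(\pi',\rho')$ with $\pi'$ in the class. *)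

(* Defs.v *)
From HB Require Import structures.
From mathcomp Require Import all_boot all_order all_algebra.
Set Implicit Arguments. Unset Strict Implicit. Unset Printing Implicit Defensive.
Import Order.TTheory GRing.Theory Num.Theory.
Local Open Scope ring_scope.

(* Machine types form a finite type M.
   An AM strategy is pi : M -> M -> R with pi r m = pi^r_m.
   A malware strategy is rho : M -> R. *)

Definition am_strategy {R : realFieldType} {M : finType} (pi : M -> M -> R) :=
  forall r, (forall m, 0 <= pi r m <= 1) /\ \sum_(m : M) pi r m <= 1.

Definition m_strategy {R : realFieldType} {M : finType} (rho : M -> R) :=
  forall m, 0 <= rho m <= 1.

Definition uM {R : realFieldType} {M : finType} (e d : M -> R)
  (pi : M -> M -> R) (rho : M -> R) : R :=
  \sum_(r : M) ((e r - d r) * rho r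
                + d r * (1 - \sum_(m : M) pi r m * rho m) * rho r).

Definition uAM {R : realFieldType} {M : finType} (d : M -> R)
  (pi : M -> M -> R) (rho : M -> R) : R :=
  \sum_(r : M) d r *
    (\sum_(m : M) (pi r m * rho m + pi r m * (1 - rho m) * (1 - rho r))
     + (1 - \sum_(m : M) pi r m) * (1 - rho r)).

Definition best_response {R : realFieldType} {M : finType} (e d : M -> R)
  (pi : M -> M -> R) (rho : M -> R) :=
  m_strategy rho /\
  forall rho' : M -> R, m_strategy rho' -> uM e d pi rho' <= uM e d pi rho.

Definition det_strategy {R : realFieldType} {M : finType} (m0 : M) : M -> M -> R :=
  fun (_ : M) (m : M) => if m == m0 then 1 else 0.

(* Main.v *)
Require Import Defs.
From mathcomp Require Import all_boot all_order all_algebra.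
From mathcomp Require Import ring lra.
From Stdlib Require Import FunctionalExtensionality.
Import Order.TTheory GRing.Theory Num.Theory.
Local Open Scope ring_scope.

Lemma sum_det (R : realFieldType) (M : finType) (m : M) (F : M -> R) :
  \sum_(i : M) (if i == m then 1 else 0) * F i = F m.
Proof.
rewrite (bigD1 m) //= eqxx mul1r big1 ?addr0 // => i /negbTE ->; by rewrite mul0r.
Qed.

Lemma uM_det (R : realFieldType) (M : finType) (e : M -> R) m rho :
  uM e e (det_strategy m) rho = (1 - rho m) * \sum_r e r * rho r.
Proof.
rewrite /uM mulr_sumr; apply: eq_bigr => r _.
rewrite /det_strategy sum_det subrr mul0r add0r; ring.
Qed.

Lemma uAM_det (R : realFieldType) (M : finType) (e : M -> R) m rho :
  \sum_r e r = 1 ->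
  uAM e (det_strategy m) rho = 1 - uM e e (det_strategy m) rho.
Proof.
move=> hs; rewrite uM_det /uAM.
have -> : \sum_r e r * (\sum_m0 (det_strategy m r m0 * rho m0 +
      det_strategy m r m0 * (1 - rho m0) * (1 - rho r)) +
      (1 - \sum_m0 det_strategy m r m0) * (1 - rho r))
  = \sum_r (e r - (1 - rho m) * (e r * rho r)).
  apply: eq_bigr => r _.
  have -> : \sum_m0 (det_strategy m r m0 * rho m0 +
      det_strategy m r m0 * (1 - rho m0) * (1 - rho r))
      = \sum_m0 det_strategy m r m0 * (rho m0 + (1 - rho m0) * (1 - rho r)).
    by apply: eq_bigr => i _; ring.
  have h1 : \sum_m0 (det_strategy m r m0 : R) = 1.
    by rewrite -(@sum_det R M m (fun _ => 1 : R)); apply: eq_bigr => i _; rewrite mulr1.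
  rewrite /det_strategy sum_det -/(det_strategy m r) h1; ring.
by rewrite sumrB hs -mulr_sumr.
Qed.

Lemma sum_bound (R : realFieldType) (M : finType) (e : M -> R) m rho :
  (forall r, 0 <= e r <= 1) -> \sum_r e r = 1 -> m_strategy rho ->
  \sum_r e r * rho r <= rho m * e m + (1 - e m).
Proof.
move=> he hs hr.
have hs' : \sum_(r | r != m) e r = 1 - e m by rewrite -hs [in RHS](bigD1 m) //= addrAC subrr add0r.
rewrite (bigD1 m) //= -hs' mulrC lerD2l; apply: ler_sum => r _.
have := he r; have := hr r; move=> /andP[? ?] /andP[? ?]; nra.
Qed.

Theorem mainTheorem4 (R : realFieldType) (M : finType) (e d : M -> R)
  (he01 : forall r, 0 <= e r <= 1)
  (hesum : \sum_(r : M) e r = 1)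
  (hde : forall r, d r = e r)
  (mstar : M) (hmaj : forall m, e m <= e mstar) :
  (exists rho, best_response e d (det_strategy mstar) rho) /\
  forall rho, best_response e d (det_strategy mstar) rho ->
  forall (m : M) (rho' : M -> R), best_response e d (det_strategy m) rho' ->
    uAM d (det_strategy m) rho' <= uAM d (det_strategy mstar) rho.
Proof.
have -> : d = e by apply: functional_extensionality => r; exact: hde.
split.
  set E := e mstar.
  set x : R := if E <= 1/2 then 0 else (2 * E - 1) / (2 * E).
  have hx : 0 <= x <= 1.
    rewrite /x; case: ifP => h; first by rewrite lexx ler01.
    have hE : 1/2 < E by rewrite ltNge h.
    have hE0 : 0 < 2 * E by lra.
    by rewrite divr_ge0 ?ler_pdivrMr /=; lra.
  exists (fun r => if r == mstar then x else 1).
  have hs : m_strategy (fun r : M => if r == mstar then x else 1).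
    by move=> r /=; case: ifP => _ //; rewrite ler01 lexx.
  split => // rho' hr'.
  rewrite !uM_det eqxx.
  have -> : \sum_r e r * (if r == mstar then x else 1) = x * E + (1 - E).
    have hs' : \sum_(r | r != mstar) e r = 1 - E by rewrite -hesum [in RHS](bigD1 mstar) //= addrAC subrr add0r.
    rewrite (bigD1 mstar) //= eqxx -hs' mulrC; congr (_ + _).
    by apply: eq_bigr => r /negbTE ->; rewrite mulr1.
  have hb := @sum_bound R M e mstar _ he01 hesum hr'.
  have hy := hr' mstar; move: hy => /andP[hy0 hy1].
  apply: (le_trans (y := (1 - rho' mstar) * (rho' mstar * E + (1 - E)))).
    apply: ler_wpM2l; [lra|]. exact hb.
  move: (he01 mstar) => /andP[hE0 hE1]; rewrite -/E in hE0 hE1.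
  rewrite /x; case: ifP => h; first nra.
  have hE : 1/2 < E by rewrite ltNge h.
  have hE2 : 2 * E != 0 by apply/negP => /eqP; lra.
  set y := rho' mstar.
  have key : 4 * E * ((1 - y) * (y * E + (1 - E))) + (2*E*y - 2*E + 1)^+2 = 1 by ring.
  have -> : (1 - (2 * E - 1) / (2 * E)) * ((2 * E - 1) / (2 * E) * E + (1 - E))
      = 1 / (4 * E) by field; lra.
  rewrite ler_pdivlMr; last lra.
  by rewrite mulrC -[X in _ <= X]key lerDl sqr_ge0.
move=> rho [hr _] m rho' [hr' hopt].
rewrite !uAM_det // lerD2l lerN2.
set x := rho mstar.
pose s := fun r : M => if r == m then x else 1.
have hs : m_strategy s by move=> r; rewrite /s; case: ifP => _; [exact: hr|rewrite ler01 lexx].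
apply: (le_trans _ (hopt s hs)).
rewrite !uM_det /s eqxx.
have -> : \sum_r e r * (if r == m then x else 1) = x * e m + (1 - e m).
  have hs' : \sum_(r | r != m) e r = 1 - e m by rewrite -hesum [in RHS](bigD1 m) //= addrAC subrr add0r.
  rewrite (bigD1 m) //= eqxx -hs' mulrC; congr (_ + _).
  by apply: eq_bigr => r /negbTE ->; rewrite mulr1.
have hb := @sum_bound R M e mstar _ he01 hesum hr.
move: (hr mstar) (hmaj m) => /andP[hx0 hx1] hm; rewrite -/x in hx0 hx1 hb.
apply: (le_trans (y := (1 - x) * (x * e mstar + (1 - e mstar)))).
  apply: ler_wpM2l; [rewrite -/x; lra|exact hb].
apply: ler_wpM2l; first lra.
nra.
Qed.
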